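(* Let $\Delta_{\{u_0,u_1,u_2\}}$ be a shortest-path triangle with Gromov product nodes $u_{0,1},u_{0,2},u_{1,2}$, and let $i\in\{0,1,2\}$. Let $v$ be a node on the subpath of $\mathcal P_\Delta(u_i,u_{i+2 \bmod 3})$ from $u_i$ to $u_{i,\,i+2\bmod 3}$, and $v'$ a node on the subpath of $\mathcal P_\Delta(u_i,u_{i+1\bmod 3})$ from $u_i$ to $u_{i,\,i+1\bmod 3}$, such that $d_{u_i,v}=d_{u_i,v'}$. Then $$d_{v,v'}\le 6\,\delta_{\Delta_{\{u_0,u_1,u_2\}}}+2.$$
   Context: $G=(V,E)$ is a finite connected undirected graph with $n\ge 4$ nodes and $d_{u,v}$ denotes the shortest-path distance (number of edges). For any four nodes $w_1,w_2,w_3,w_4$, form the three sums $d_{w_1,w_2}+d_{w_3,w_4}$, $d_{w_1,w_3}+d_{w_2,w_4}$, $d_{w_1,w_4}+d_{w_2,w_3}$, order them as $S\le M\le L$, and set $\delta_{w_1,w_2,w_3,w_4}=(L-M)/2$; $\delta_{\mathrm{worst}}(G)=\max_{w_1,w_2,w_3,w_4\in V}\delta_{w_1,w_2,w_3,w_4}$. A shortest-path triangle $\Delta_{\{u_0,u_1,u_2\}}$ consists of three distinct nodes $u_0,u_1,u_2$ together with chosen shortest paths $\mathcal P_\Delta(u_0,u_1)$, $\mathcal P_\Delta(u_0,u_2)$, $\mathcal P_\Delta(u_1,u_2)$ between the respective pairs. $\delta_{\Delta_{\{u_0,u_1,u_2\}}}$ is the maximum of $\delta_{w_1,w_2,w_3,w_4}$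 over all quadruples of nodes lying on these three paths (so $\delta_\Delta\le\delta_{\mathrm{worst}}(G)$). Gromov product nodes of the triangle are nodes $u_{0,1}\in\mathcal P_\Delta(u_0,u_1)$, $u_{0,2}\in\mathcal P_\Delta(u_0,u_2)$, $u_{1,2}\in\mathcal P_\Delta(u_1,u_2)$ with $d_{u_0,u_{0,1}}+d_{u_1,u_{0,1}}=d_{u_0,u_1}$, $d_{u_0,u_{0,2}}+d_{u_2,u_{0,2}}=d_{u_0,u_2}$, $d_{u_1,u_{1,2}}+d_{u_2,u_{1,2}}=d_{u_1,u_2}$, $d_{u_1,u_{0,1}}=d_{u_1,u_{1,2}}$, and $d_{u_0,u_{0,1}}=d_{u_0,u_{0,2}}=\lfloor (d_{u_0,u_1}+d_{u_0,u_2}-d_{u_1,u_2})/2\rfloor$. By convention $u_{1,0}=u_{0,1}$, $u_{2,0}=u_{0,2}$, $u_{2,1}=u_{1,2}$. *)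

(* Defs.v *)
From HB Require Import structures.
From mathcomp Require Import all_boot all_order all_algebra.
Set Implicit Arguments. Unset Strict Implicit. Unset Printing Implicit Defensive.
Import Order.TTheory GRing.Theory Num.Theory.

Section Defs.
Variables (T : finType) (e : rel T).

Definition walk_len (x y : T) (k : nat) : bool :=
  [exists p : k.-tuple T, path e x p && (last x p == y)].

(* shortest-path distance (number of edges); in a connected graph a shortest
   walk has fewer than #|T| edges, so searching k < #|T| is exhaustive *)
Definition dist (x y : T) : nat := find (walk_len x y) (iota 0 #|T|).

Definition shortest_path (a b : T) (s : seq T) : Prop :=
  exists p : seq T, [/\ s = a :: p, path e a p, last a p = b & size p = dist a b].

Definition delta_quad (w1 w2 w3 w4 : T) : rat :=
  let ss := sort leq [:: dist w1 w2 + dist w3 w4;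
                         dist w1 w3 + dist w2 w4;
                         dist w1 w4 + dist w2 w3] in
  (((nth 0 ss 2)%:R - (nth 0 ss 1)%:R) / 2)%R.

Definition delta_on (N : seq T) : rat :=
  \big[Num.max/0%R]_(w1 <- N) \big[Num.max/0%R]_(w2 <- N)
   \big[Num.max/0%R]_(w3 <- N) \big[Num.max/0%R]_(w4 <- N) delta_quad w1 w2 w3 w4.
End Defs.

Definition o0 : 'I_3 := @Ordinal 3 0 isT.
Definition o1 : 'I_3 := @Ordinal 3 1 isT.
Definition o2 : 'I_3 := @Ordinal 3 2 isT.
Definition addmod3 (i : 'I_3) (k : nat) : 'I_3 := inord ((i + k) %% 3).

(* Shortest-path triangle: nodes u 0, u 1, u 2 (distinct) and for i <> j a
   chosen shortest path P i j from u i to u j, with P j i = rev (P i j)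
   (so there are exactly three chosen paths, traversable in both directions). *)
Definition sp_triangle (T : finType) (e : rel T) (u : 'I_3 -> T)
    (P : 'I_3 -> 'I_3 -> seq T) : Prop :=
  injective u /\
  forall i j, i != j -> shortest_path e (u i) (u j) (P i j) /\ P j i = rev (P i j).

Definition tri_nodes (T : finType) (P : 'I_3 -> 'I_3 -> seq T) : seq T :=
  P o0 o1 ++ P o0 o2 ++ P o1 o2.

Definition delta_tri (T : finType) (e : rel T) (P : 'I_3 -> 'I_3 -> seq T) : rat :=
  delta_on e (tri_nodes P).

Definition gromov_nodes (T : finType) (e : rel T) (u : 'I_3 -> T)
    (P : 'I_3 -> 'I_3 -> seq T) (g : 'I_3 -> 'I_3 -> T) : Prop :=
  let d := dist e in
  [/\ (forall i j, g i j = g j i),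
      [/\ g o0 o1 \in P o0 o1, g o0 o2 \in P o0 o2 & g o1 o2 \in P o1 o2],
      [/\ d (u o0) (g o0 o1) + d (u o1) (g o0 o1) = d (u o0) (u o1),
          d (u o0) (g o0 o2) + d (u o2) (g o0 o2) = d (u o0) (u o2) &
          d (u o1) (g o1 o2) + d (u o2) (g o1 o2) = d (u o1) (u o2)],
      d (u o1) (g o0 o1) = d (u o1) (g o1 o2) &
      d (u o0) (g o0 o1) = (d (u o0) (u o1) + d (u o0) (u o2) - d (u o1) (u o2))./2 /\
      d (u o0) (g o0 o2) = (d (u o0) (u o1) + d (u o0) (u o2) - d (u o1) (u o2))./2].

Definition subpath_to (T : finType) (s : seq T) (x : T) : seq T :=
  take (index x s).+1 s.

(* Main.v *)
Require Import Defs.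
From HB Require Import structures.
From mathcomp Require Import all_boot all_order all_algebra.
From mathcomp Require Import zify lra.
Import Order.TTheory GRing.Theory Num.Theory.

Set Implicit Arguments.
Unset Strict Implicit.
Section Dist.
Variables (T : finType) (e : rel T).
Hypothesis e_sym : symmetric e.
Hypothesis e_conn : forall x y : T, connect e x y.

Lemma walkP x y k : reflect (exists p, [/\ size p = k, path e x p & last x p = y])
  (walk_len e x y k).
Proof.
apply: (iffP existsP) => [[p /andP[hp /eqP hl]]|[p [hs hp hl]]].
  by exists (val p); rewrite size_tuple.
have ht : size p == k by apply/eqP.
by exists (Tuple ht); rewrite /= hp hl eqxx.
Qed.

Lemma short_walk x y : exists2 k, k < #|T| & walk_len e x y k.
Proof.
have /connectP[p hp ->] := e_conn x y.
case: (shortenP hp) => p' hp' hu _.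
exists (size p'); last by apply/walkP; exists p'.
have := max_card (mem (x :: p')).
by rewrite (card_uniqP hu) /=.
Qed.

Lemma has_walk x y : has (walk_len e x y) (iota 0 #|T|).
Proof.
have [k hk hw] := short_walk x y.
by apply/hasP; exists k => //; rewrite mem_iota.
Qed.

Lemma dist_lt x y : dist e x y < #|T|.
Proof. by have := has_walk x y; rewrite has_find size_iota. Qed.

Lemma dist_walk x y : walk_len e x y (dist e x y).
Proof.
have := nth_find 0 (has_walk x y).
rewrite nth_iota; first by rewrite add0n.
exact: dist_lt.
Qed.

Lemma dist_min x y k : walk_len e x y k -> dist e x y <= k.
Proof.
move=> hw; case: (leqP #|T| k) => hk.
  by apply: ltnW; apply: leq_trans (dist_lt x y) hk.
rewrite leqNgt; apply/negP => hlt.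
have := before_find 0 hlt; rewrite nth_iota // add0n hw //.
Qed.

Lemma walk_cat x y z k1 k2 : walk_len e x y k1 -> walk_len e y z k2 ->
  walk_len e x z (k1 + k2).
Proof.
move=> /walkP[p1 [s1 h1 l1]] /walkP[p2 [s2 h2 l2]]; apply/walkP.
exists (p1 ++ p2); split.
- by rewrite size_cat s1 s2.
- by rewrite cat_path h1 l1 h2.
- by rewrite last_cat l1.
Qed.

Lemma dist_tri x y z : dist e x z <= dist e x y + dist e y z.
Proof. exact/dist_min/walk_cat/dist_walk/dist_walk. Qed.

Lemma walk_rev x y k : walk_len e x y k -> walk_len e y x k.
Proof.
move=> /walkP[p [s h l]]; apply/walkP.
exists (rev (belast x p)); split.
- by rewrite size_rev size_belast.
- have := rev_path e x p; rewrite l => ->.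
  by rewrite (@eq_path _ _ e) // => a b; rewrite /= e_sym.
- case: p h l {s} => [|a p] _ /= <-; first by [].
  by rewrite rev_cons last_rcons.
Qed.

Lemma dist_sym x y : dist e x y = dist e y x.
Proof.
by apply/eqP; rewrite eqn_leq !dist_min // walk_rev // dist_walk.
Qed.

Lemma dist_xx x : dist e x x = 0.
Proof. by apply/eqP; rewrite -leqn0 dist_min //; apply/walkP; exists [::]. Qed.

Lemma last_take' (x : T) p j : j <= size p -> last x (take j p) = nth x (x :: p) j.
Proof.
elim: p x j => [|y p IH] x [|j] //= hj.
by rewrite IH // (set_nth_default x).
Qed.

Lemma sp_pos a b s w : shortest_path e a b s -> w \in s ->
  dist e a w = index w s /\ dist e a w + dist e w b = dist e a b.
Proof.
move=> [p [-> hp hl hs]] hw.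
set j := index w (a :: p).
have hj : j <= size p by have := hw; rewrite -index_mem /=.
have hw' : nth a (a :: p) j = w by rewrite nth_index.
have hp12 : path e a (take j p) && path e (last a (take j p)) (drop j p).
  by rewrite -cat_path cat_take_drop.
case/andP: hp12 => hpa hpb.
have h1 : walk_len e a w j.
  apply/walkP; exists (take j p); split.
  - by rewrite size_takel.
  - by [].
  - by rewrite last_take'.
have h2 : walk_len e w b (size p - j).
  apply/walkP; exists (drop j p); split.
  - by rewrite size_drop.
  - by rewrite -hw' -last_take'.
  - by rewrite -hw' -last_take' // -last_cat cat_take_drop.
have := dist_min h1; have := dist_min h2; have := dist_tri a w b.
rewrite -hs; lia.
Qed.

Lemma index_take_lt (w : T) n s : w \in take n s -> index w s < n.
Proof.
move=> hw; rewrite -(cat_take_drop n s) index_cat hw.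
have := index_mem w (take n s); rewrite hw => h.
apply: leq_trans h _; rewrite size_take; case: ifP => // /negbT; lia.
Qed.

Lemma bigmax_ge0 (N : seq T) (F : T -> rat) : (0 <= \big[Num.max/0%R]_(x <- N) F x)%R.
Proof.
elim: N => [|a N IH]; first by rewrite big_nil.
by rewrite big_cons le_max IH orbT.
Qed.

Lemma bigmax_ge (N : seq T) (F : T -> rat) w : w \in N ->
  (F w <= \big[Num.max/0%R]_(x <- N) F x)%R.
Proof.
elim: N => [|a N IH] //; rewrite in_cons big_cons le_max.
by case/orP => [/eqP->|/IH->]; rewrite ?lexx ?orbT.
Qed.

Lemma delta_ge0 N : (0 <= delta_on e N)%R.
Proof. exact: bigmax_ge0. Qed.

Lemma quad_le N w1 w2 w3 w4 : w1 \in N -> w2 \in N -> w3 \in N -> w4 \in N ->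
  (delta_quad e w1 w2 w3 w4 <= delta_on e N)%R.
Proof.
move=> h1 h2 h3 h4; rewrite /delta_on.
apply: le_trans (bigmax_ge _ h1); apply: le_trans (bigmax_ge _ h2).
apply: le_trans (bigmax_ge _ h3); exact: (bigmax_ge _ h4).
Qed.

Lemma s3 (A B C : nat) : let ss := sort leq [:: A; B; C] in
  (A + nth 0 ss 1 <= B + nth 0 ss 2) || (A + nth 0 ss 1 <= C + nth 0 ss 2).
Proof. rewrite /sort /=.
case: (leqP A B) => h1 /=; case: (leqP A C) => h2 /=; case: (leqP B C) => h3 /=; lia.
Qed.

Local Notation d := (dist e).

Lemma fourpt N w1 w2 w3 w4 : w1 \in N -> w2 \in N -> w3 \in N -> w4 \in N ->
  let D := delta_on e N in
  ((d w1 w2)%:R + (d w3 w4)%:R <= (d w1 w3)%:R + (d w2 w4)%:R + 2 * D :> rat)%R \/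
  ((d w1 w2)%:R + (d w3 w4)%:R <= (d w1 w4)%:R + (d w2 w3)%:R + 2 * D :> rat)%R.
Proof.
move=> h1 h2 h3 h4 D.
have hq := quad_le h1 h2 h3 h4; rewrite /delta_quad in hq.
have := s3 (d w1 w2 + d w3 w4) (d w1 w3 + d w2 w4) (d w1 w4 + d w2 w3).
move: hq; set L := nth 0 _ 2; set M := nth 0 _ 1 => hq.
case/orP => h; [left|right]; move: h; rewrite -(ler_nat rat) !natrD => h; rewrite -/D in hq; lra.
Qed.

Lemma chain N x y z v v' t : x \in N -> y \in N -> z \in N -> v \in N -> v' \in N ->
  d x v = t -> d x v' = t -> d x v + d v z = d x z -> d x v' + d v' y = d x y ->
  t + t + d y z <= d x y + d x z + 1 ->
  ((d v v')%:R <= 6 * delta_on e N + 2 :> rat)%R.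
Proof.
move=> hx hy hz hv hv' e1 e2 e3 e4 e5.
have D0 := delta_ge0 N.
have c3 : ((d x v)%:R + (d v z)%:R = (d x z)%:R :> rat)%R by rewrite -natrD e3.
have c4 : ((d x v')%:R + (d v' y)%:R = (d x y)%:R :> rat)%R by rewrite -natrD e4.
have c5 : ((t + t + d y z)%:R <= (d x y + d x z + 1)%:R :> rat)%R by rewrite ler_nat.
rewrite !natrD in c5.
rewrite e1 in c3; rewrite e2 in c4.
have s1 := fourpt hx hz hv hy.
have s2 := fourpt hx hy hv hv'.
rewrite /= e1 e2 (dist_sym z y) (dist_sym z v) (dist_sym y v') in s1 s2.
rewrite (dist_sym y v) in s2.
case: s1 => s1; case: s2 => s2; lra.
Qed.

End Dist.
Unset Implicit Arguments.
Set Strict Implicit.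

Lemma ord3 (k : 'I_3) : k = o0 \/ k = o1 \/ k = o2.
Proof.
case: k => [[|[|[|k]]] Hk]; [left|right;left|right;right|by []]; exact: val_inj.
Qed.

Lemma am01 : addmod3 o0 1 = o1. Proof. by apply: val_inj; rewrite /= inordK. Qed.
Lemma am02 : addmod3 o0 2 = o2. Proof. by apply: val_inj; rewrite /= inordK. Qed.
Lemma am11 : addmod3 o1 1 = o2. Proof. by apply: val_inj; rewrite /= inordK. Qed.
Lemma am12 : addmod3 o1 2 = o0. Proof. by apply: val_inj; rewrite /= inordK. Qed.
Lemma am21 : addmod3 o2 1 = o0. Proof. by apply: val_inj; rewrite /= inordK. Qed.
Lemma am22 : addmod3 o2 2 = o1. Proof. by apply: val_inj; rewrite /= inordK. Qed.

Theorem theorem2 (T : finType) (e : rel T)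
  (e_sym : symmetric e) (e_irr : irreflexive e)
  (e_conn : forall x y : T, connect e x y) (n_ge4 : 4 <= #|T|)
  (u : 'I_3 -> T) (P : 'I_3 -> 'I_3 -> seq T) (g : 'I_3 -> 'I_3 -> T)
  (hT : sp_triangle e u P) (hg : gromov_nodes e u P g)
  (i : 'I_3) (v v' : T)
  (hv : v \in subpath_to (P i (addmod3 i 2)) (g i (addmod3 i 2)))
  (hv' : v' \in subpath_to (P i (addmod3 i 1)) (g i (addmod3 i 1)))
  (hd : dist e (u i) v = dist e (u i) v') :
  ((dist e v v')%:R <= 6 * delta_tri e P + 2 :> rat)%R.
Proof.
case: (hT) => uinj hP.
have dsym := dist_sym e_sym e_conn.
have dtri := dist_tri e_conn.
have gmem : forall a b, a != b -> g a b \in P a b.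
  case: hg => gs [m1 m2 m3] _ _ _.
  move=> a b; case: (ord3 a) => [->|[->|->]]; case: (ord3 b) => [->|[->|->]] // _.
  - by rewrite (hP o0 o1 isT).2 mem_rev gs.
  - by rewrite (hP o0 o2 isT).2 mem_rev gs.
  - by rewrite (hP o1 o2 isT).2 mem_rev gs.
have Pin : forall a b, a != b -> {subset P a b <= tri_nodes P}.
  move=> a b; case: (ord3 a) => [->|[->|->]]; case: (ord3 b) => [->|[->|->]] // _ w hw;
    rewrite /tri_nodes !mem_cat.
  - by rewrite hw.
  - by rewrite hw orbT.
  - by rewrite (hP o0 o1 isT).2 mem_rev in hw; rewrite hw.
  - by rewrite hw !orbT.
  - by rewrite (hP o0 o2 isT).2 mem_rev in hw; rewrite hw orbT.
  - by rewrite (hP o1 o2 isT).2 mem_rev in hw; rewrite hw !orbT.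
have ua : forall a b, a != b -> u a \in P a b.
  by move=> a b h; have [p [-> _ hl _]] := (hP a b h).1; exact: mem_head.
have ub : forall a b, a != b -> u b \in P a b.
  by move=> a b h; have [p [-> _ hl _]] := (hP a b h).1; rewrite -hl; exact: mem_last.
set j1 := addmod3 i 1 in hv' *; set j2 := addmod3 i 2 in hv *.
have [h1 h2] : i != j1 /\ i != j2.
  by rewrite /j1 /j2; case: (ord3 i) => [->|[->|->]]; rewrite ?am01 ?am02 ?am11 ?am12 ?am21 ?am22.
have tb : forall t, t <= dist e (u i) (g i j1) -> t <= dist e (u i) (g i j2) ->
    t + t + dist e (u j1) (u j2) <= dist e (u i) (u j1) + dist e (u i) (u j2) + 1.
  case: hg => gs _ [e1 e2 e3] e4 [e5 e6].
  have t1 := dtri (u o1) (u o0) (u o2).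
  have s01 := dsym (u o0) (u o1).
  have s02 := dsym (u o0) (u o2).
  have s12 := dsym (u o1) (u o2).
  rewrite /j1 /j2; case: (ord3 i) => [->|[->|->]];
    rewrite ?am01 ?am02 ?am11 ?am12 ?am21 ?am22 => t ht1 ht2.
  - lia.
  - rewrite (gs o1 o0) in ht2; lia.
  - rewrite (gs o2 o0) in ht1; rewrite (gs o2 o1) in ht2; lia.
have hvP : v \in P i j2 := mem_take hv.
have hv'P : v' \in P i j1 := mem_take hv'.
have [dv ev] := sp_pos e_conn (hP i j2 h2).1 hvP.
have [dv' ev'] := sp_pos e_conn (hP i j1 h1).1 hv'P.
have [dg _] := sp_pos e_conn (hP i j2 h2).1 (gmem i j2 h2).
have [dg' _] := sp_pos e_conn (hP i j1 h1).1 (gmem i j1 h1).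
have i1 := index_take_lt hv.
have i2 := index_take_lt hv'.
apply: (chain e_sym e_conn (Pin _ _ h1 _ (ua _ _ h1)) (Pin _ _ h1 _ (ub _ _ h1))
  (Pin _ _ h2 _ (ub _ _ h2)) (Pin _ _ h2 _ hvP) (Pin _ _ h1 _ hv'P) erefl (esym hd) ev ev').
apply: tb.
- by rewrite hd dv' dg'; rewrite -ltnS.
- by rewrite dv dg; rewrite -ltnS.
Qed.
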